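(* Consider a three-phase system consisting of a liquid (index $l$), its vapor (index $v$) and a gas (index $g$). Each phase $k\in\{l,g,v\}$ has an extensive entropy $S_k:(\mathbb R^+)^3\to\mathbb R\cup\{-\infty\}$, $W_k=(M_k,V_k,E_k)\mapsto S_k(W_k)$, satisfying: (i) $C_k:=\{W\in(\mathbb R^+)^3: S_k(W)>-\infty\}$ is a non-empty closed convex set; (ii) $S_k$ is concave; (iii) $S_k$ is positively homogeneous of degree 1 ($S_k(\lambda W)=\lambda S_k(W)$ for all $\lambda>0$, $W\in C_k$); (iv) $S_k$ is upper semi-continuous; (v) $S_k$ is $\mathcal C^2$ on $C_k$ with $\partial S_k/\partial E>0$. Let $\Sigma(W_l,W_g,W_v)=S_l(W_l)+S_g(W_g)+S_v(W_v)$. Define the equilibrium entropy without phase transition, for $(M,V,E)\in(\mathbb R^+)^3$ and fixed $M_l,M_g\ge 0$ with $M_v:=M-M_l-M_g\ge 0$, by $$S_{NPT}(M,V,E,M_l,M_g)=\max\Big\{\Sigma(W_l,W_g,W_v)\;:\; W_k=(M_k,V_k,E_k)\in C_k,\ E=E_l+E_g+E_v,\ V=V_l+V_v,\ V_g=V_v\Big\},$$ and the equilibrium entropy with phase transition, for fixed $M_g\ge 0$, by $$S_{PT}(M,V,E,M_g)=\max\Big\{\Sigma(W_l,W_g,W_v)\;:\; W_k\in C_k,\ M-M_g=M_l+M_v,\ E=E_l+E_g+E_v,\ V=V_l+V_v,\ V_g=V_v\Big\}.$$ Then $S_{NPT}$ (resp. $S_{PT}$) is a positively homogeneous of degree 1,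 concave function of its arguments.
   Context: The constraint $V=V_l+V_v$, $V_g=V_v$ expresses that the liquid is immiscible with the gaseous phases while the vapor and the gas are miscible (share the same volume). The mass $M_g$ of gas is fixed (no mass transfer with the gas). *)

(* Defs.v *)
From HB Require Import structures.
From mathcomp Require Import all_boot all_order all_algebra.
From mathcomp Require Import all_classical all_reals all_analysis.
Set Implicit Arguments. Unset Strict Implicit. Unset Printing Implicit Defensive.
Import Order.TTheory GRing.Theory Num.Theory.
Import numFieldNormedType.Exports.
Local Open Scope classical_set_scope.
Local Open Scope ring_scope.

Section Defs.
Variable R : realType.

Definition Mof (W : 'rV[R]_3) : R := W ord0 0.
Definition Vof (W : 'rV[R]_3) : R := W ord0 1.
Definition Eof (W : 'rV[R]_3) : R := W ord0 2.

Definition ebasis (i : 'I_3) : 'rV[R]_3 := delta_mx ord0 i.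

Definition orthant : set 'rV[R]_3 := [set W | forall i, 0 <= W ord0 i].

Definition convex_set3 (C : set 'rV[R]_3) : Prop :=
  forall x y (t : R), C x -> C y -> 0 <= t <= 1 -> C (t *: x + (1 - t) *: y).

Definition effdom (S : 'rV[R]_3 -> \bar R) : set 'rV[R]_3 :=
  [set W | orthant W /\ (-oo < S W)%E].

Definition C2_on (U : set 'rV[R]_3) (f : 'rV[R]_3 -> R) : Prop :=
  forall x, U x -> forall i j : 'I_3,
    [/\ derivable f x (ebasis i),
        derivable ('D_(ebasis i) f) x (ebasis j),
        {for x, continuous f},
        {for x, continuous ('D_(ebasis i) f)} &
        {for x, continuous ('D_(ebasis j) ('D_(ebasis i) f))}].

Record entropy_axioms (S : 'rV[R]_3 -> \bar R) : Prop := {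
  ent_not_pinfty : forall W, orthant W -> S W != +oo%E;
  ent_dom_nonempty : effdom S !=set0;
  ent_dom_closed : closed (effdom S);
  ent_dom_convex : convex_set3 (effdom S);
  ent_concave : forall x y (t : R), orthant x -> orthant y -> 0 < t < 1 ->
     (t%:E * S x + (1 - t)%:E * S y <= S (t *: x + (1 - t) *: y)%R)%E;
  ent_homog : forall (lam : R) W, 0 < lam -> effdom S W ->
     S (lam *: W)%R = (lam%:E * S W)%E;
  ent_usc : forall a : R, closed [set W | orthant W /\ (a%:E <= S W)%E];
  ent_C2 : C2_on (interior (effdom S)) (fun W => fine (S W));
  ent_dE_pos : forall W, interior (effdom S) W ->
     0 < 'D_(ebasis 2) (fun W => fine (S W)) W
}.

Definition Sigma (Sl Sg Sv : 'rV[R]_3 -> \bar R) (Wl Wg Wv : 'rV[R]_3) : \bar R :=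
  (Sl Wl + Sg Wg + Sv Wv)%E.

(* Equilibrium entropy without phase transition (sup over the constraint set;
   -oo when the constraint set is empty). *)
Definition S_NPT (Sl Sg Sv : 'rV[R]_3 -> \bar R) (M V E Ml Mg : R) : \bar R :=
  ereal_sup [set s | exists Wl Wg Wv,
    [/\ [/\ effdom Sl Wl, effdom Sg Wg & effdom Sv Wv],
        [/\ Mof Wl = Ml, Mof Wg = Mg & Mof Wv = M - Ml - Mg],
        [/\ E = Eof Wl + Eof Wg + Eof Wv, V = Vof Wl + Vof Wv & Vof Wg = Vof Wv]
      & s = Sigma Sl Sg Sv Wl Wg Wv]].

Definition S_PT (Sl Sg Sv : 'rV[R]_3 -> \bar R) (M V E Mg : R) : \bar R :=
  ereal_sup [set s | exists Wl Wg Wv,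
    [/\ [/\ effdom Sl Wl, effdom Sg Wg & effdom Sv Wv],
        [/\ Mof Wg = Mg & M - Mg = Mof Wl + Mof Wv],
        [/\ E = Eof Wl + Eof Wg + Eof Wv, V = Vof Wl + Vof Wv & Vof Wg = Vof Wv]
      & s = Sigma Sl Sg Sv Wl Wg Wv]].

Definition dom_NPT (M V E Ml Mg : R) : Prop :=
  [/\ 0 <= M, 0 <= V, 0 <= E & [/\ 0 <= Ml, 0 <= Mg & 0 <= M - Ml - Mg]].
Definition dom_PT (M V E Mg : R) : Prop :=
  [/\ 0 <= M, 0 <= V, 0 <= E & 0 <= Mg].
End Defs.

(* Main.v *)
Require Import Defs.
From HB Require Import structures.
From mathcomp Require Import all_boot all_order all_algebra.
From mathcomp Require Import all_classical all_reals all_analysis.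
From mathcomp Require Import ring lra.
Import Order.TTheory GRing.Theory Num.Theory.
Local Open Scope ring_scope.

Section Helpers.
Set Implicit Arguments.
Variable R : realType.
Local Open Scope ereal_scope.

Lemma sup_add_le (A B : set (\bar R)) (z : \bar R) :
  (forall a, A a -> a \is a fin_num) -> (forall b, B b -> b \is a fin_num) ->
  (forall a b, A a -> B b -> a + b <= z) -> ereal_sup A + ereal_sup B <= z.
Proof.
move=> Af Bf H.
have H1 : forall b, B b -> ereal_sup A + b <= z.
  move=> b Bb; rewrite -leeBrDr ?Bf //.
  by apply: ge_ereal_sup => a Aa; rewrite leeBrDr ?Bf //; exact: H.
case Es: (ereal_sup A) => [r| |] in H1 *.
- rewrite addeC -leeBrDr //; apply: ge_ereal_sup => b Bb.
  by rewrite leeBrDr // addeC; exact: H1.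
- have [->|/set0P [b Bb]] := eqVneq B set0.
    by rewrite ereal_sup0 addeNy leNye.
  have := H1 b Bb; rewrite addye; last by have := Bf b Bb; case: (b).
  by rewrite leye_eq => /eqP ->; rewrite leey.
- by rewrite addNye leNye.
Qed.

Lemma effdom_fin {S : 'rV[R]_3 -> \bar R} {W} :
  entropy_axioms S -> effdom S W -> exists r, S W = r%:E.
Proof.
move=> hS [oW hW]; have := ent_not_pinfty hS oW.
by move: hW; case: (S W) => [r| |] //; exists r.
Qed.

Lemma effdom_scale {S : 'rV[R]_3 -> \bar R} {lam : R} {W} :
  entropy_axioms S -> (0 < lam)%R -> effdom S W ->
  effdom S (lam *: W) /\ S (lam *: W) = lam%:E * S W.
Proof.
move=> hS l0 dW; have hom := ent_homog hS l0 dW; split => //.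
have [r Er] := effdom_fin hS dW.
case: dW => oW _; split.
  move=> i /=; rewrite mxE; apply: mulr_ge0; [exact: ltW|exact: oW].
by rewrite hom Er -EFinM ltNye.
Qed.

Lemma effdom_comb {S : 'rV[R]_3 -> \bar R} {t : R} {x y} :
  entropy_axioms S -> (0 < t < 1)%R -> effdom S x -> effdom S y ->
  effdom S (t *: x + (1 - t) *: y)%R /\
  t%:E * S x + (1 - t)%:E * S y <= S (t *: x + (1 - t) *: y)%R.
Proof.
move=> hS t01 dx dy; split.
  apply: (ent_dom_convex hS) => //.
  by case/andP: t01 => t0 t1; rewrite ltW // ltW.
by apply: (ent_concave hS) => //; [case: dx|case: dy].
Qed.

Lemma Sigma_scale {Sl Sg Sv} {lam : R} {Wl Wg Wv} :
  entropy_axioms Sl -> entropy_axioms Sg -> entropy_axioms Sv -> (0 < lam)%R ->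
  effdom Sl Wl -> effdom Sg Wg -> effdom Sv Wv ->
  Sigma Sl Sg Sv (lam *: Wl) (lam *: Wg) (lam *: Wv) = lam%:E * Sigma Sl Sg Sv Wl Wg Wv.
Proof.
move=> hl hg hv l0 dl dg dv; rewrite /Sigma.
have [_ ->] := effdom_scale hl l0 dl.
have [_ ->] := effdom_scale hg l0 dg.
have [_ ->] := effdom_scale hv l0 dv.
have [a ->] := effdom_fin hl dl.
have [b ->] := effdom_fin hg dg.
have [c ->] := effdom_fin hv dv.
rewrite /Sigma -!EFinM -!EFinD; congr EFin; ring.
Qed.

Lemma Sigma_comb {Sl Sg Sv} {t : R} {Wl Wg Wv Wl' Wg' Wv'} :
  entropy_axioms Sl -> entropy_axioms Sg -> entropy_axioms Sv -> (0 < t < 1)%R ->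
  effdom Sl Wl -> effdom Sg Wg -> effdom Sv Wv ->
  effdom Sl Wl' -> effdom Sg Wg' -> effdom Sv Wv' ->
  t%:E * Sigma Sl Sg Sv Wl Wg Wv + (1 - t)%:E * Sigma Sl Sg Sv Wl' Wg' Wv' <=
  Sigma Sl Sg Sv (t *: Wl + (1 - t) *: Wl')%R (t *: Wg + (1 - t) *: Wg')%R
     (t *: Wv + (1 - t) *: Wv')%R.
Proof.
move=> hl hg hv t01 dl dg dv dl' dg' dv'.
have [_ Hl] := effdom_comb hl t01 dl dl'.
have [_ Hg] := effdom_comb hg t01 dg dg'.
have [_ Hv] := effdom_comb hv t01 dv dv'.
rewrite /Sigma; move: Hl Hg Hv.
have [a ->] := effdom_fin hl dl.
have [b ->] := effdom_fin hg dg.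
have [c ->] := effdom_fin hv dv.
have [a' ->] := effdom_fin hl dl'.
have [b' ->] := effdom_fin hg dg'.
have [c' ->] := effdom_fin hv dv'.
rewrite /Sigma -!EFinM -!EFinD => Hl Hg Hv.
apply: (le_trans _ (leeD (leeD Hl Hg) Hv)).
rewrite -!EFinD lee_fin le_eqVlt; apply/orP; left; apply/eqP; ring.
Qed.

Lemma scaleE (lam : R) (W : 'rV[R]_3) i : (lam *: W) ord0 i = (lam * W ord0 i)%R.
Proof. by rewrite mxE. Qed.

Lemma combE (t : R) (W W' : 'rV[R]_3) i :
  (t *: W + (1 - t) *: W')%R ord0 i = (t * W ord0 i + (1 - t) * W' ord0 i)%R.
Proof. by rewrite !mxE. Qed.

Lemma scaleKV (lam : R) (W : 'rV[R]_3) : lam != 0%R -> lam *: (lam^-1 *: W) = W.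
Proof. by move=> l0; rewrite scalerA mulfV // scale1r. Qed.

End Helpers.

Theorem proposition2p1 (R : realType) (Sl Sg Sv : 'rV[R]_3 -> \bar R)
  (hl : entropy_axioms Sl) (hg : entropy_axioms Sg) (hv : entropy_axioms Sv) :
  (* S_NPT: positively homogeneous of degree 1 and concave *)
  ((forall (lam : R) M V E Ml Mg, 0 < lam -> dom_NPT M V E Ml Mg ->
      S_NPT Sl Sg Sv (lam * M) (lam * V) (lam * E) (lam * Ml) (lam * Mg)
      = (lam%:E * S_NPT Sl Sg Sv M V E Ml Mg)%E) /\
   (forall (t : R) M V E Ml Mg M' V' E' Ml' Mg', 0 < t < 1 ->
      dom_NPT M V E Ml Mg -> dom_NPT M' V' E' Ml' Mg' ->
      (t%:E * S_NPT Sl Sg Sv M V E Ml Mg + (1 - t)%:E * S_NPT Sl Sg Sv M' V' E' Ml' Mg'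
       <= S_NPT Sl Sg Sv (t * M + (1 - t) * M') (t * V + (1 - t) * V')
            (t * E + (1 - t) * E') (t * Ml + (1 - t) * Ml') (t * Mg + (1 - t) * Mg'))%E))
  /\
  (* S_PT: positively homogeneous of degree 1 and concave *)
  ((forall (lam : R) M V E Mg, 0 < lam -> dom_PT M V E Mg ->
      S_PT Sl Sg Sv (lam * M) (lam * V) (lam * E) (lam * Mg)
      = (lam%:E * S_PT Sl Sg Sv M V E Mg)%E) /\
   (forall (t : R) M V E Mg M' V' E' Mg', 0 < t < 1 ->
      dom_PT M V E Mg -> dom_PT M' V' E' Mg' ->
      (t%:E * S_PT Sl Sg Sv M V E Mg + (1 - t)%:E * S_PT Sl Sg Sv M' V' E' Mg'
       <= S_PT Sl Sg Sv (t * M + (1 - t) * M') (t * V + (1 - t) * V')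
            (t * E + (1 - t) * E') (t * Mg + (1 - t) * Mg'))%E)).
Proof.
split; split.
- move=> lam M V E Ml Mg l0 _.
  have l0' : lam != 0 by rewrite gt_eqF.
  have il0 : 0 < lam^-1 by rewrite invr_gt0.
  rewrite /S_NPT -ereal_sup_pZl //; congr ereal_sup; apply/seteqP; split => s /=.
  + case=> Wl [Wg [Wv [[dl dg dv] [hMl hMg hMv] [hE hV hVg] ->]]].
    have [dl' _] := effdom_scale hl il0 dl.
    have [dg' _] := effdom_scale hg il0 dg.
    have [dv' _] := effdom_scale hv il0 dv.
    exists (Sigma Sl Sg Sv (lam^-1 *: Wl) (lam^-1 *: Wg) (lam^-1 *: Wv)).
      exists (lam^-1 *: Wl), (lam^-1 *: Wg), (lam^-1 *: Wv).
      move: hMl hMg hMv hE hV hVg; rewrite /Mof /Vof /Eof !scaleE => -> -> -> hE hV ->.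
      split => //; split; rewrite ?mulKf //; first by field.
      * by apply/(mulfI l0'); rewrite hE; field.
      * by apply/(mulfI l0'); rewrite hV; field.
    by rewrite -Sigma_scale // !scaleKV.
  + case=> x [Wl [Wg [Wv [[dl dg dv] [hMl hMg hMv] [hE hV hVg] ->]]]] <-.
    have [dl' _] := effdom_scale hl l0 dl.
    have [dg' _] := effdom_scale hg l0 dg.
    have [dv' _] := effdom_scale hv l0 dv.
    exists (lam *: Wl), (lam *: Wg), (lam *: Wv); split => //; last by rewrite Sigma_scale.
      by move: hMl hMg hMv; rewrite /Mof !scaleE => -> -> ->; split => //; ring.
    by move: hE hV hVg; rewrite /Vof /Eof !scaleE => -> -> ->; split => //; ring.
- move=> t M V E Ml Mg M' V' E' Ml' Mg' t01 _ _.
  have t0 : 0 < t by case/andP: t01.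
  have t1 : 0 < 1 - t by case/andP: t01 => _; rewrite subr_gt0.
  rewrite /S_NPT -ereal_sup_pZl // -[X in (_ + X)%E]ereal_sup_pZl //.
  apply: sup_add_le.
  + move=> _ [x [Wl [Wg [Wv [[dl dg dv] _ _ ->]]]] <-].
    rewrite /Sigma; have [a ->] := effdom_fin hl dl.
    have [b ->] := effdom_fin hg dg; have [c ->] := effdom_fin hv dv; by [].
  + move=> _ [x [Wl [Wg [Wv [[dl dg dv] _ _ ->]]]] <-].
    rewrite /Sigma; have [a ->] := effdom_fin hl dl.
    have [b ->] := effdom_fin hg dg; have [c ->] := effdom_fin hv dv; by [].
  move=> _ _ [x [Wl [Wg [Wv [[dl dg dv] [hMl hMg hMv] [hE hV hVg] ->]]]] <-]
    [y [Wl' [Wg' [Wv' [[dl' dg' dv'] [hMl' hMg' hMv'] [hE' hV' hVg'] ->]]]] <-].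
  apply: le_ereal_sup_tmp.
  exists (Sigma Sl Sg Sv (t *: Wl + (1 - t) *: Wl') (t *: Wg + (1 - t) *: Wg')
     (t *: Wv + (1 - t) *: Wv')); last exact: Sigma_comb.
  exists (t *: Wl + (1 - t) *: Wl'), (t *: Wg + (1 - t) *: Wg'), (t *: Wv + (1 - t) *: Wv').
  split => //.
  + split; [exact: (effdom_comb hl t01 dl dl').1|exact: (effdom_comb hg t01 dg dg').1
           |exact: (effdom_comb hv t01 dv dv').1].
  + by move: hMl hMg hMv hMl' hMg' hMv'; rewrite /Mof !combE => -> -> -> -> -> ->; split => //; ring.
  + by move: hE hV hVg hE' hV' hVg'; rewrite /Vof /Eof !combE => -> -> -> -> -> ->; split => //; ring.
- move=> lam M V E Mg l0 _.
  have l0' : lam != 0 by rewrite gt_eqF.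
  have il0 : 0 < lam^-1 by rewrite invr_gt0.
  rewrite /S_PT -ereal_sup_pZl //; congr ereal_sup; apply/seteqP; split => s /=.
  + case=> Wl [Wg [Wv [[dl dg dv] [hMg hM] [hE hV hVg] ->]]].
    have [dl' _] := effdom_scale hl il0 dl.
    have [dg' _] := effdom_scale hg il0 dg.
    have [dv' _] := effdom_scale hv il0 dv.
    exists (Sigma Sl Sg Sv (lam^-1 *: Wl) (lam^-1 *: Wg) (lam^-1 *: Wv)).
      exists (lam^-1 *: Wl), (lam^-1 *: Wg), (lam^-1 *: Wv).
      move: hMg hM hE hV hVg; rewrite /Mof /Vof /Eof !scaleE => -> hM hE hV ->.
      split => //; split; rewrite ?mulKf //.
      * by apply/(mulfI l0'); rewrite mulrBr hM; field.
      * by apply/(mulfI l0'); rewrite hE; field.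
      * by apply/(mulfI l0'); rewrite hV; field.
    by rewrite -Sigma_scale // !scaleKV.
  + case=> x [Wl [Wg [Wv [[dl dg dv] [hMg hM] [hE hV hVg] ->]]]] <-.
    have [dl' _] := effdom_scale hl l0 dl.
    have [dg' _] := effdom_scale hg l0 dg.
    have [dv' _] := effdom_scale hv l0 dv.
    exists (lam *: Wl), (lam *: Wg), (lam *: Wv); split => //; last by rewrite Sigma_scale.
      move: hMg hM; rewrite /Mof !scaleE => -> hM; split => //.
      by rewrite -mulrBr hM; ring.
    by move: hE hV hVg; rewrite /Vof /Eof !scaleE => -> -> ->; split => //; ring.
- move=> t M V E Mg M' V' E' Mg' t01 _ _.
  have t0 : 0 < t by case/andP: t01.
  have t1 : 0 < 1 - t by case/andP: t01 => _; rewrite subr_gt0.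
  rewrite /S_PT -ereal_sup_pZl // -[X in (_ + X)%E]ereal_sup_pZl //.
  apply: sup_add_le.
  + move=> _ [x [Wl [Wg [Wv [[dl dg dv] _ _ ->]]]] <-].
    rewrite /Sigma; have [a ->] := effdom_fin hl dl.
    have [b ->] := effdom_fin hg dg; have [c ->] := effdom_fin hv dv; by [].
  + move=> _ [x [Wl [Wg [Wv [[dl dg dv] _ _ ->]]]] <-].
    rewrite /Sigma; have [a ->] := effdom_fin hl dl.
    have [b ->] := effdom_fin hg dg; have [c ->] := effdom_fin hv dv; by [].
  move=> _ _ [x [Wl [Wg [Wv [[dl dg dv] [hMg hM] [hE hV hVg] ->]]]] <-]
    [y [Wl' [Wg' [Wv' [[dl' dg' dv'] [hMg' hM'] [hE' hV' hVg'] ->]]]] <-].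
  apply: le_ereal_sup_tmp.
  exists (Sigma Sl Sg Sv (t *: Wl + (1 - t) *: Wl') (t *: Wg + (1 - t) *: Wg')
     (t *: Wv + (1 - t) *: Wv')); last exact: Sigma_comb.
  exists (t *: Wl + (1 - t) *: Wl'), (t *: Wg + (1 - t) *: Wg'), (t *: Wv + (1 - t) *: Wv').
  split => //.
  + split; [exact: (effdom_comb hl t01 dl dl').1|exact: (effdom_comb hg t01 dg dg').1
           |exact: (effdom_comb hv t01 dv dv').1].
  + move: hMg hM hMg' hM'; rewrite /Mof !combE => -> hM -> hM'; split => //.
    have -> : t * M + (1 - t) * M' - (t * Mg + (1 - t) * Mg')
      = t * (M - Mg) + (1 - t) * (M' - Mg') by ring.
    by rewrite hM hM'; ring.
  + by move: hE hV hVg hE' hV' hVg'; rewrite /Vof /Eof !combE => -> -> -> -> -> ->; split => //; ring.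
Qed.
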